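(* Let $X$ be the space of all sequences of the form $c=\sum_{k=1}^N a_k\star b_k$ (finite sums) with $a_k,b_k$ finitely supported sequences, normed by $\|c\|_X=\inf\sum_{k=1}^N\|a_k\|_{\ell^2(\mathbb{N})}\|b_k\|_{\ell^2(\mathbb{N})}$ over all such finite representations, and let $\mathcal{X}$ be its Banach space completion. For $m=M(\alpha)\in\mathcal{M}$ let $Jm(c)=(\alpha,c)$, $c\in X$. Then $Jm$ extends to a bounded linear functional on $\mathcal{X}$ for every $m\in\mathcal{M}$, and $J\colon\mathcal{M}\to\mathcal{X}^*$ is an isometric isomorphism.
   Context: For a sequence $\alpha\colon\mathbb{N}\to\mathbb{C}$, $M(\alpha)$ is defined by $\langle M(\alpha)a,b\rangle_{\ell^2(\mathbb{N})}=\sum_{n,m}a(n)\overline{b(m)}\alpha(nm)$ for finitely supported $a,b$; $\mathcal{M}$ is the space of those $M(\alpha)$ extending to bounded operators on $\ell^2(\mathbb{N})$, with the operator norm. Dirichlet convolution: $(a\star b)(n)=\sum_{k\mid n}a(k)\overline{b(n/k)}$; $(a,b)=\sum_n a(n)b(n)$ is the bilinear pairing. *)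

(* Defs.v *)
From HB Require Import structures.
From mathcomp Require Import all_boot all_order all_algebra.
From mathcomp Require Import all_classical all_reals all_analysis.
From mathcomp Require Import complex.
Set Implicit Arguments.
Unset Strict Implicit.
Unset Printing Implicit Defensive.
Import Order.TTheory GRing.Theory Num.Theory.
Local Open Scope ring_scope.
Local Open Scope complex_scope.

Section Defs.
Variable R : realType.
Local Notation C := R[i].

(* Sequences indexed by N = {1,2,...}; we use nat -> C and ignore index 0
   (finitely supported sequences are required to vanish at 0). *)

Definition supp_le (N : nat) (a : nat -> C) : Prop :=
  forall n : nat, ((n == 0%N) || (N < n)%N) -> a n = 0.

Definition finsupp (a : nat -> C) : Prop := exists N, supp_le N a.

Definition l2N (N : nat) (a : nat -> C) : R :=
  Num.sqrt (\sum_(1 <= n < N.+1) complex.Re (`|a n| ^+ 2)).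

Definition dconv (a b : nat -> C) : nat -> C :=
  fun n => \sum_(1 <= k < n.+1 | (k %| n)%N) a k * (b (n %/ k)%N)^*.

Definition rep (c : nat -> C) (N : nat) (s : seq ((nat -> C) * (nat -> C))) : Prop :=
  (forall p, p \in s -> supp_le N p.1 /\ supp_le N p.2) /\
  (forall n, c n = \sum_(p <- s) dconv p.1 p.2 n).

Definition inX (c : nat -> C) : Prop := exists N s, rep c N s.

Definition normX (c : nat -> C) : R :=
  inf [set r : R | exists N s, rep c N s /\
         r = \sum_(p <- s) l2N N p.1 * l2N N p.2].

Definition pairN (N : nat) (alpha c : nat -> C) : C :=
  \sum_(1 <= n < N.+1) alpha n * c n.

(* <M(alpha) a, b> for a, b supported in {1,...,N} *)
Definition Mform (alpha : nat -> C) (N : nat) (a b : nat -> C) : C :=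
  \sum_(1 <= n < N.+1) \sum_(1 <= m < N.+1) a n * (b m)^* * alpha (n * m)%N.

(* K bounds the sesquilinear form of M(alpha) on finitely supported vectors,
   i.e. M(alpha) extends to a bounded operator on l^2 of norm <= K *)
Definition Mbound (alpha : nat -> C) (K : R) : Prop :=
  forall N a b, supp_le N a -> supp_le N b ->
    `|Mform alpha N a b| <= (K * l2N N a * l2N N b)%:C.

Definition inM (alpha : nat -> C) : Prop := exists K : R, Mbound alpha K.

Definition Mnorm (alpha : nat -> C) : R :=
  inf [set K : R | 0 <= K /\ Mbound alpha K].

Definition is_completion (Y : completeNormedModType C) (iota : (nat -> C) -> Y)
  : Prop :=
  (forall c d, inX c -> inX d -> iota (c \+ d) = iota c + iota d) /\
  (forall (l : C) c, inX c -> iota (fun n => l * c n) = l *: iota c) /\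
  (forall c, inX c -> `|iota c| = (normX c)%:C) /\
  (forall (y : Y) (e : R), 0 < e -> exists c, inX c /\ `|y - iota c| < e%:C).

Definition bdd_functional (Y : normedModType C) (phi : Y -> C) : Prop :=
  (forall x y : Y, phi (x + y) = phi x + phi y) /\
  (forall (l : C) (x : Y), phi (l *: x) = l * phi x) /\
  (exists K : R, forall x : Y, `|phi x| <= K%:C * `|x|).

Definition dual_norm (Y : normedModType C) (phi : Y -> C) : R :=
  inf [set K : R | 0 <= K /\ forall x : Y, `|phi x| <= K%:C * `|x|].

End Defs.

(* Main.v *)
Require Import Defs.
From HB Require Import structures.
From mathcomp Require Import all_boot all_order all_algebra.
From mathcomp Require Import all_classical all_reals all_analysis.
From mathcomp Require Import complex.
From mathcomp Require Import zify ring lra.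
Import Order.TTheory GRing.Theory Num.Theory.
Local Open Scope ring_scope.
Set Implicit Arguments.
Unset Strict Implicit.
Unset Printing Implicit Defensive.

Section Aux.
Variable R : realType.
Local Notation C := R[i].
Local Open Scope complex_scope.

Lemma sum_eq1 (F : nat -> C) i lo hi :
  \sum_(lo <= m < hi) (if m == i then F m else 0) = if (lo <= i < hi)%N then F i else 0.
Proof. by rewrite -big_mkcond big_nat1_eq. Qed.

Lemma sum_widen0 (F : nat -> C) lo n1 n2 : (lo <= n1 <= n2)%N ->
  (forall k, (n1 <= k < n2)%N -> F k = 0) ->
  \sum_(lo <= k < n2) F k = \sum_(lo <= k < n1) F k.
Proof.
move=> /andP[h1 h2] h; rewrite (big_cat_nat h1 h2) /= [X in _ + X]big_nat_cond.
by rewrite [X in _ + X]big1 ?addr0 // => k /andP[/h -> _].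
Qed.

Lemma supp_leW N M (a : nat -> C) : (N <= M)%N -> supp_le N a -> supp_le M a.
Proof.
move=> NM h n /orP[/eqP->|Mn]; first by apply: h; rewrite eqxx.
by apply: h; rewrite (leq_ltn_trans NM Mn) orbT.
Qed.

Lemma pairN_widen N M alpha (c : nat -> C) : (N <= M)%N -> supp_le N c ->
  pairN M alpha c = pairN N alpha c.
Proof.
move=> NM h; rewrite /pairN (@sum_widen0 _ 1 N.+1 M.+1) //.
by move=> k /andP[k1 _]; rewrite h ?mulr0 // k1 orbT.
Qed.

Lemma pairN_add N alpha (c d : nat -> C) :
  pairN N alpha (c \+ d) = pairN N alpha c + pairN N alpha d.
Proof. by rewrite /pairN -big_split; apply: eq_bigr => n _; rewrite /= mulrDr. Qed.

Lemma pairN_scale N alpha l (c : nat -> C) :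
  pairN N alpha (fun n => l * c n) = l * pairN N alpha c.
Proof. by rewrite /pairN mulr_sumr; apply: eq_bigr => n _; rewrite mulrCA. Qed.

Lemma dconv0 (a b : nat -> C) : dconv a b 0 = 0.
Proof. by rewrite /dconv big_geq. Qed.

Lemma dconv_supp N (a b : nat -> C) : supp_le N a -> supp_le N b ->
  supp_le (N * N) (dconv a b).
Proof.
move=> ha hb n.
move=> /orP[/eqP->|Nn]; first exact: dconv0.
rewrite /dconv big_nat_cond big1 // => k /andP[/andP[k1 kn] kd].
have [kN|Nk] := leqP k N.
  suff -> : b (n %/ k)%N = 0 by rewrite raddf0 mulr0.
  apply: hb; apply/orP; right.
  rewrite ltnNge; apply/negP => h.
  have e : (n %/ k * k = n)%N by apply: divnK.
  move: Nn; rewrite -e ltnNge => /negP; apply.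
  by rewrite mulnC leq_mul.
by rewrite ha ?mul0r // Nk orbT.
Qed.


Lemma conv_inner {N} {a b : nat -> C} {j} : supp_le N a -> supp_le N b -> (0 < j)%N ->
  dconv a b j = \sum_(1 <= k < N.+1) \sum_(1 <= m < N.+1)
                  (if j == (k * m)%N then a k * (b m)^* else 0).
Proof.
move=> ha hb j0; rewrite /dconv big_mkcond /=.
set G := fun k => if (k %| j)%N then a k * (b (j %/ k)%N)^* else 0.
rewrite -(@sum_widen0 G 1 j.+1 (maxn N j).+1); last first.
  move=> k /andP[jk _]; rewrite /G; case: ifP => // kd.
  by move: (dvdn_leq j0 kd); rewrite leqNgt jk.
  by apply/andP; split; [by []|]; rewrite ltnS leq_maxr.
rewrite (@sum_widen0 G 1 N.+1 (maxn N j).+1); last first.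
  by move=> k /andP[Nk _]; rewrite /G ha ?mul0r ?if_same // Nk orbT.
  by apply/andP; split; [by []|]; rewrite ltnS leq_maxl.
apply: eq_big_nat => k /andP[k1 _]; rewrite /G.
case: ifP => kd; last first.
  rewrite big1 // => m _; case: ifP => // /eqP e.
  by move: kd; rewrite e dvdn_mulr.
have e : j = (j %/ k * k)%N by rewrite divnK.
rewrite (eq_bigr (fun m => if m == (j %/ k)%N then a k * (b m)^* else 0)); last first.
  move=> m _; congr (if _ then _ else _).
  by rewrite {1}e mulnC eqn_pmul2l // eq_sym.
rewrite sum_eq1; case: ifP => // hq.
suff -> : b (j %/ k)%N = 0 by rewrite raddf0 mulr0.
apply: hb; move: hq; case: (j %/ k)%N => //= q; rewrite ltnS => /negbT.
by rewrite -ltnNge => ->; rewrite ?orbT.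
Qed.

Lemma Mform_pair N M alpha (a b : nat -> C) : supp_le N a -> supp_le N b ->
  (N * N <= M)%N -> pairN M alpha (dconv a b) = Mform alpha N a b.
Proof.
move=> ha hb NM; rewrite /pairN /Mform.
transitivity (\sum_(1 <= j < M.+1) \sum_(1 <= k < N.+1) \sum_(1 <= m < N.+1)
   (if j == (k * m)%N then alpha j * (a k * (b m)^* ) else 0)).
  apply: eq_big_nat => j /andP[j1 _]; rewrite (conv_inner ha hb j1) mulr_sumr.
  apply: eq_bigr => k _; rewrite mulr_sumr; apply: eq_bigr => m _.
  by case: ifP; rewrite ?mulr0.
rewrite exchange_big; apply: eq_big_nat => k /andP[k1 kN].
rewrite exchange_big; apply: eq_big_nat => m /andP[m1 mN].
rewrite sum_eq1; case: ifP => [_|/negbT]; first by rewrite mulrC.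
rewrite muln_gt0 k1 m1 /= ltnS => /negP; case.
by apply: leq_trans NM; apply: leq_mul; rewrite -ltnS.
Qed.

End Aux.

Section X.
Variable R : realType.
Local Notation C := R[i].
Local Open Scope complex_scope.

Lemma inX_add (c d : nat -> C) : inX c -> inX d -> inX (c \+ d).
Proof.
move=> [N1 [s1 [h1 e1]]] [N2 [s2 [h2 e2]]].
exists (maxn N1 N2), (s1 ++ s2); split.
  move=> p; rewrite mem_cat => /orP[/h1|/h2] [? ?]; split;
  by apply: supp_leW; last eassumption; rewrite ?leq_maxl ?leq_maxr.
by move=> n; rewrite big_cat /= e1 e2.
Qed.

Lemma inX_scale l (c : nat -> C) : inX c -> inX (fun n => l * c n).
Proof.
move=> [N [s [h e]]].
exists N, (map (fun p => ((fun n => l * p.1 n), p.2)) s); split.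
  move=> p /mapP[q qs ->] /=; have [h1 h2] := h q qs; split => //.
  by move=> n /h1 ->; rewrite mulr0.
move=> n; rewrite e big_map mulr_sumr; apply: eq_bigr => p _.
by rewrite /dconv mulr_sumr; apply: eq_bigr => k _; rewrite mulrA.
Qed.

Lemma inX0 : inX (fun _ : nat => 0 : C).
Proof. by exists 0%N, [::]; split; [move=> p; rewrite in_nil | move=> n; rewrite big_nil]. Qed.

Lemma inX_supp (c : nat -> C) : inX c -> exists N, supp_le N c.
Proof.
move=> [N [s [h e]]]; exists (N * N)%N => n hn; rewrite e big_seq big1 // => p ps.
by have [h1 h2] := h p ps; apply: (@dconv_supp _ _ _ _ h1 h2 n hn).
Qed.

Lemma supp_add N (c d : nat -> C) : supp_le N c -> supp_le N d -> supp_le N (c \+ d).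
Proof. by move=> h1 h2 n hn /=; rewrite h1 ?h2 ?addr0. Qed.

Lemma supp_scale N l (c : nat -> C) : supp_le N c -> supp_le N (fun n => l * c n).
Proof. by move=> h n hn; rewrite h ?mulr0. Qed.

Lemma l2N_ge0 N (a : nat -> C) : 0 <= l2N N a.
Proof. exact: sqrtr_ge0. Qed.

Definition Sset (c : nat -> C) : set R := [set r : R | exists N s, rep c N s /\
         r = \sum_(p <- s) l2N N p.1 * l2N N p.2].

Lemma Sset_ge0 c r : Sset c r -> 0 <= r.
Proof.
move=> [N [s [_ ->]]]; apply: sumr_ge0 => p _; apply: mulr_ge0; exact: l2N_ge0.
Qed.

Lemma normX_le (c : nat -> C) r : Sset c r -> normX c <= r.
Proof.
move=> hr; apply: ge_inf => //; exists 0 => x hx; exact: Sset_ge0 hx.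
Qed.

Lemma normX_conv N (a b : nat -> C) : supp_le N a -> supp_le N b ->
  normX (dconv a b) <= l2N N a * l2N N b.
Proof.
move=> ha hb; apply: normX_le; exists N, [:: (a, b)]; split; last by rewrite big_seq1.
split; first by move=> p; rewrite inE => /eqP -> /=.
by move=> n; rewrite big_seq1.
Qed.

Lemma normX_ge0 (c : nat -> C) : inX c -> 0 <= normX c.
Proof.
move=> [N [s hs]]; apply: lb_le_inf.
  by exists (\sum_(p <- s) l2N N p.1 * l2N N p.2), N, s.
move=> x hx; exact: Sset_ge0 hx.
Qed.

Lemma normC_real (z : C) : `|z| = (complex.Re `|z|)%:C.
Proof. by rewrite RRe_real // normr_real. Qed.

Lemma pbound alpha K (c : nat -> C) N : Mbound alpha K -> 0 <= K -> inX c ->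
  supp_le N c -> `|pairN N alpha c| <= (K * normX c)%:C.
Proof.
move=> hM K0 hX hN.
have key : forall r, Sset c r -> `|pairN N alpha c| <= (K * r)%:C.
  move=> r [N' [s [[hs e] ->]]].
  set M := maxn N (N' * N').
  rewrite -(@pairN_widen _ N M) ?leq_maxl //.
  have -> : pairN M alpha c = \sum_(p <- s) Mform alpha N' p.1 p.2.
    rewrite /pairN; under eq_bigr do rewrite e mulr_sumr.
    rewrite exchange_big /= big_seq [RHS]big_seq; apply: eq_bigr => p ps.
    have [h1 h2] := hs p ps.
    by rewrite -(@Mform_pair _ N' M alpha _ _ h1 h2) // leq_maxr.
  apply: le_trans (ler_norm_sum _ _ _) _.
  rewrite mulr_sumr raddf_sum /= big_seq [X in _ <= X]big_seq; apply: ler_sum => p ps.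
  have [h1 h2] := hs p ps; rewrite mulrA; exact: hM.
rewrite normC_real lecR.
have ne : (Sset c !=set0)%classic by move: hX => [N' [s hs]]; exists (\sum_(p <- s) l2N N' p.1 * l2N N' p.2), N', s.
have [x Sx] := ne.
have [K00|Kp] := eqVneq K 0.
  rewrite K00 mul0r; have := key x Sx; rewrite K00 mul0r normC_real lecR //.
have Kp' : 0 < K by rewrite lt0r Kp.
rewrite -ler_pdivrMl //; apply: lb_le_inf => // r Sr.
rewrite ler_pdivrMl //; have := key r Sr; rewrite normC_real lecR //.
Qed.

End X.

Section Y.
Variable R : realType.
Local Notation C := R[i].
Local Open Scope complex_scope.
Variable Y : completeNormedModType C.

Definition nY (y : Y) : R := complex.Re `|y|.

Lemma normY (y : Y) : `|y| = (nY y)%:C.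
Proof. by rewrite /nY RRe_real // normr_real. Qed.

Lemma nY_ge0 y : 0 <= nY y.
Proof. by rewrite -ler0c -normY. Qed.

Lemma nYD x y : nY (x + y) <= nY x + nY y.
Proof. by rewrite -lecR rmorphD /= -!normY ler_normD. Qed.

Lemma nYN x : nY (- x) = nY x.
Proof. by rewrite /nY normrN. Qed.

Lemma nYB x y : nY (x - y) = nY (y - x).
Proof. by rewrite -nYN opprB. Qed.

Lemma eps_le (x a M : R) : 0 <= M -> (forall e, 0 < e -> x <= a + M * e) -> x <= a.
Proof.
move=> M0 h; apply/ler_addgt0Pr => e e0.
have M1 : 0 < M + 1 by lra.
apply: le_trans (h (e / (M + 1)) _) _; first by apply: divr_gt0.
rewrite lerD2l mulrA ler_pdivrMr // mulrC ler_wpM2l; lra.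
Qed.

Definition mcs (I : Type) (P : I -> Prop) (pt : I -> Y) (v : I -> R) (K : R) (y : Y) : R :=
  sup [set r | exists i, P i /\ r = v i - K * nY (y - pt i)].

Arguments mcs {I} P pt v K y.

Lemma mcsP (I : Type) (P : I -> Prop) (pt : I -> Y) (v : I -> R) (K : R) :
  0 <= K -> (exists i, P i) ->
  (forall i j, P i -> P j -> v i - v j <= K * nY (pt i - pt j)) ->
  forall y i, P i -> v i - K * nY (y - pt i) <= mcs P pt v K y /\
                     mcs P pt v K y <= v i + K * nY (y - pt i).
Proof.
move=> K0 [i0 Pi0] Lip y.
have ub : forall i j, P i -> P j -> v j - K * nY (y - pt j) <= v i + K * nY (y - pt i).
  move=> i j Pi Pj; have h1 := Lip j i Pj Pi.
  have t : nY (pt j - pt i) <= nY (y - pt j) + nY (y - pt i).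
    have -> : pt j - pt i = - (y - pt j) + (y - pt i) by rewrite opprB addrA subrK.
    by apply: le_trans (nYD _ _) _; rewrite nYN.
  have t2 := ler_wpM2l K0 t; rewrite mulrDr in t2; lra.
move=> i Pi; split.
  apply: ub_le_sup; last by exists i.
  by exists (v i0 + K * nY (y - pt i0)) => r [j [Pj ->]]; apply: ub.
apply: ge_sup; first by exists (v i0 - K * nY (y - pt i0)), i0.
by move=> r [j [Pj ->]]; apply: ub.
Qed.

End Y.

Section Ext.
Variable R : realType.
Local Notation C := R[i].
Local Open Scope complex_scope.

Definition nC (z : C) : R := complex.Re `|z|.

Lemma nC_ge0 z : 0 <= nC z.
Proof. by rewrite -ler0c /nC -normC_real. Qed.

Lemma nCD x y : nC (x + y) <= nC x + nC y.
Proof. by rewrite -lecR rmorphD /= /nC -!normC_real ler_normD. Qed.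

Lemma nCN x : nC (- x) = nC x.
Proof. by rewrite /nC normrN. Qed.

Lemma nCM x y : nC (x * y) = nC x * nC y.
Proof. by apply: complexI; rewrite rmorphM /= /nC -!normC_real normrM. Qed.

Lemma nC_eq0 z : nC z = 0 -> z = 0.
Proof. by move=> h; apply/eqP; rewrite -normr_eq0 normC_real -/(nC z) h. Qed.

Lemma ReIm_le (w : C) : `|complex.Re w| <= nC w /\ `|complex.Im w| <= nC w.
Proof.
rewrite /nC normc_def /=; split; rewrite -sqrtr_sqr; apply: ler_wsqrtr.
  by rewrite lerDl sqr_ge0.
by rewrite lerDr sqr_ge0.
Qed.

Lemma nC_ReIm (w : C) : nC w <= `|complex.Re w| + `|complex.Im w|.
Proof.
rewrite /nC normc_def /=.
rewrite -(ger0_norm (_ : 0 <= `|complex.Re w| + `|complex.Im w|)); last first.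
  by apply: addr_ge0.
rewrite -sqrtr_sqr; apply: ler_wsqrtr.
rewrite sqrrD !real_normK ?num_real //.
by rewrite -addrA lerD2l lerDr mulrn_wge0 // mulr_ge0.
Qed.

End Ext.

Lemma zid (V : zmodType) (a b c d : V) : b - (c - d) = (a + b - c) + - (a - d).
Proof. by rewrite !opprB [RHS]addrC !addrA subrK [b + d]addrC. Qed.
Lemma zid2 (V : zmodType) (z1 z2 p q : V) : z1 + z2 - p = (z1 - q) + (z2 - (p - q)).
Proof. by rewrite opprB [z2 + _]addrC !addrA subrK addrAC. Qed.

Section Comp.
Variable R : realType.
Local Notation C := R[i].
Local Open Scope complex_scope.
Variable Y : completeNormedModType C.
Variable iota : (nat -> C) -> Y.
Hypothesis Hc : is_completion iota.

Lemma iota_add c d : inX c -> inX d -> iota (c \+ d) = iota c + iota d.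
Proof. exact: (proj1 Hc). Qed.
Lemma iota_scale l c : inX c -> iota (fun n => l * c n) = l *: iota c.
Proof. exact: (proj1 (proj2 Hc)). Qed.
Lemma iota_iso c : inX c -> `|iota c| = (normX c)%:C.
Proof. exact: (proj1 (proj2 (proj2 Hc))). Qed.

Lemma nY_iota c : inX c -> nY (iota c) = normX c.
Proof. by move=> h; apply: complexI; rewrite -normY iota_iso. Qed.

Lemma dense y e : 0 < e -> exists c, inX c /\ nY (y - iota c) < e.
Proof.
move=> e0; have [c [hc h]] := proj2 (proj2 (proj2 Hc)) y e e0.
by exists c; split => //; rewrite -ltcR -normY.
Qed.

Lemma iota0 : iota (fun _ => 0) = 0.
Proof.
have h := iota_add (@inX0 R) (@inX0 R).
have e : (fun _ : nat => 0 : C) \+ (fun _ => 0) = (fun _ => 0).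
  by apply: boolp.funext => n /=; rewrite addr0.
rewrite e in h; apply: (@addrI _ (iota (fun _ => 0))); by rewrite -h addr0.
Qed.

Definition subf (c d : nat -> C) := fun n => c n - d n.

Lemma subfE c d : subf c d = c \+ (fun n => -1 * d n).
Proof. by apply: boolp.funext => n /=; rewrite /subf mulN1r. Qed.

Lemma inX_sub c d : inX c -> inX d -> inX (subf c d).
Proof. by move=> hc hd; rewrite subfE; apply: inX_add => //; apply: inX_scale. Qed.

Lemma iota_sub c d : inX c -> inX d -> iota (subf c d) = iota c - iota d.
Proof.
by move=> hc hd; rewrite subfE iota_add ?iota_scale ?scaleN1r //; apply: inX_scale.
Qed.

Lemma pairN_sub N alpha c d : pairN N alpha (subf c d) = pairN N alpha c - pairN N alpha d.
Proof. by rewrite subfE pairN_add pairN_scale mulN1r. Qed.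

Lemma supp_sub N c d : supp_le N c -> supp_le N d -> supp_le N (subf c d).
Proof. by move=> h1 h2 n hn; rewrite /subf h1 ?h2 ?subr0. Qed.

Lemma plip alpha K c d N N' : Mbound alpha K -> 0 <= K -> inX c -> inX d ->
  supp_le N c -> supp_le N' d ->
  nC (pairN N alpha c - pairN N' alpha d) <= K * nY (iota c - iota d).
Proof.
move=> hM K0 hc hd h1 h2.
set M := maxn N N'.
have h1' : supp_le M c by apply: supp_leW h1; rewrite leq_maxl.
have h2' : supp_le M d by apply: supp_leW h2; rewrite leq_maxr.
rewrite -(@pairN_widen _ N M) ?leq_maxl // -(@pairN_widen _ N' M) ?leq_maxr //.
rewrite -pairN_sub -iota_sub // nY_iota; last by apply: inX_sub.
have := pbound hM K0 (inX_sub hc hd) (supp_sub h1' h2').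
by rewrite normC_real lecR.
Qed.

Lemma inX_conv N (a b : nat -> C) : supp_le N a -> supp_le N b -> inX (dconv a b).
Proof.
move=> ha hb; exists N, [:: (a, b)]; split.
  by move=> p; rewrite inE => /eqP -> /=.
by move=> n; rewrite big_seq1.
Qed.

Lemma bound_to_M alpha (f : Y -> C) K :
  (forall c N, inX c -> supp_le N c -> f (iota c) = pairN N alpha c) ->
  0 <= K -> (forall x, nC (f x) <= K * nY x) -> Mbound alpha K.
Proof.
move=> hf K0 hb N a b ha hb'.
rewrite -(@Mform_pair _ N (N * N)%N alpha a b ha hb' (leqnn _)).
have hX := inX_conv ha hb'.
rewrite -(hf _ _ hX (dconv_supp ha hb')) normC_real lecR.
apply: le_trans (hb _) _; rewrite nY_iota // -mulrA ler_wpM2l //.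
exact: normX_conv.
Qed.

Lemma ReB (x y : C) : complex.Re (x - y) = complex.Re x - complex.Re y.
Proof. by case: x; case: y. Qed.
Lemma ImB (x y : C) : complex.Im (x - y) = complex.Im x - complex.Im y.
Proof. by case: x; case: y. Qed.

Section Alpha.
Variable alpha : nat -> C.
Variable K : R.
Hypothesis hM : Mbound alpha K.
Hypothesis K0 : 0 <= K.

Definition Pi (i : (nat -> C) * nat) : Prop := inX i.1 /\ supp_le i.2 i.1.
Definition pti (i : (nat -> C) * nat) := iota i.1.
Definition vre (i : (nat -> C) * nat) := complex.Re (pairN i.2 alpha i.1).
Definition vim (i : (nat -> C) * nat) := complex.Im (pairN i.2 alpha i.1).

Definition phi (y : Y) : C := (mcs Pi pti vre K y) +i* (mcs Pi pti vim K y).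

Definition Char (L : R) (y : Y) (z : C) := forall c N, inX c -> supp_le N c ->
  nC (z - pairN N alpha c) <= L * nY (y - iota c).

Lemma Pi_ne : exists i, Pi i.
Proof. by exists ((fun _ => 0), 0%N); split; [exact: inX0 | move=> n _]. Qed.

Lemma Lip_re i j : Pi i -> Pi j -> vre i - vre j <= K * nY (pti i - pti j).
Proof.
move=> [hi1 hi2] [hj1 hj2]; rewrite /vre -ReB.
apply: le_trans (ler_norm _) _; apply: le_trans (proj1 (ReIm_le _)) _.
exact: plip.
Qed.

Lemma Lip_im i j : Pi i -> Pi j -> vim i - vim j <= K * nY (pti i - pti j).
Proof.
move=> [hi1 hi2] [hj1 hj2]; rewrite /vim -ImB.
apply: le_trans (ler_norm _) _; apply: le_trans (proj2 (ReIm_le _)) _.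
exact: plip.
Qed.

Lemma phi_char y : Char (K + K) y (phi y).
Proof.
move=> c N hc hN.
have Pc : Pi (c, N) by [].
have [r1 r2] := mcsP K0 Pi_ne Lip_re y Pc.
have [i1 i2] := mcsP K0 Pi_ne Lip_im y Pc.
apply: le_trans (nC_ReIm _) _.
rewrite ReB ImB /= mulrDl.
move: r1 r2 i1 i2; rewrite /vre /vim /pti /=.
set a := mcs _ _ _ _ _; set b := mcs _ _ _ _ _; set n := nY _.
move=> r1 r2 i1 i2.
apply: lerD; rewrite ler_norml; apply/andP; split; lra.
Qed.

Lemma char_uniq L1 L2 y z1 z2 : 0 <= L1 -> 0 <= L2 ->
  Char L1 y z1 -> Char L2 y z2 -> z1 = z2.
Proof.
move=> L10 L20 h1 h2; apply/eqP; rewrite -subr_eq0; apply/eqP; apply: nC_eq0.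
apply: le_anti; rewrite nC_ge0 andbT.
apply: (@eps_le _ _ 0 (L1 + L2)); first by apply: addr_ge0.
move=> e e0; have [c [hc hn]] := dense y e0; have [N hN] := inX_supp hc.
have t1 := h1 c N hc hN; have t2 := h2 c N hc hN.
have -> : z1 - z2 = (z1 - pairN N alpha c) + - (z2 - pairN N alpha c).
  by rewrite opprB addrA subrK.
apply: le_trans (nCD _ _) _; rewrite nCN add0r mulrDl.
apply: lerD.
  by apply: le_trans t1 _; apply: ler_wpM2l => //; apply: ltW.
by apply: le_trans t2 _; apply: ler_wpM2l => //; apply: ltW.
Qed.

Lemma char_add L y1 y2 z1 z2 : 0 <= L -> Char L y1 z1 -> Char L y2 z2 ->
  Char L (y1 + y2) (z1 + z2).
Proof.
move=> L0 h1 h2 c N hc hN.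
apply: (@eps_le _ _ _ (L + L)); first by apply: addr_ge0.
move=> e e0; have [c1 [hc1 hn1]] := dense y1 e0; have [N1 hN1] := inX_supp hc1.
set M := maxn N N1.
have hNM : supp_le M c by apply: supp_leW hN; rewrite leq_maxl.
have hN1M : supp_le M c1 by apply: supp_leW hN1; rewrite leq_maxr.
have hc2 := inX_sub hc hc1.
have hN2 := supp_sub hNM hN1M.
have t1 := h1 c1 N1 hc1 hN1.
have t2 := h2 _ _ hc2 hN2.
rewrite pairN_sub (@pairN_widen _ N1 M alpha c1) ?leq_maxr // in t2.
rewrite iota_sub // in t2.
rewrite -(@pairN_widen _ N M) ?leq_maxl //.
have -> : z1 + z2 - pairN M alpha c = (z1 - pairN N1 alpha c1) +
    (z2 - (pairN M alpha c - pairN N1 alpha c1)).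
  exact: zid2.
apply: le_trans (nCD _ _) _.
have t3 : nY (y2 - (iota c - iota c1)) <= nY (y1 + y2 - iota c) + nY (y1 - iota c1).
  have -> : y2 - (iota c - iota c1) = (y1 + y2 - iota c) + - (y1 - iota c1).
    exact: zid.
  by apply: le_trans (nYD _ _) _; rewrite nYN.
have t4 := ler_wpM2l L0 t3.
have t5 : L * nY (y1 - iota c1) <= L * e by apply: ler_wpM2l => //; apply: ltW.
rewrite mulrDr in t4.
apply: le_trans (lerD t1 t2) _; apply: le_trans (lerD (lexx _) t4) _.
rewrite mulrDl addrCA lerD2l; exact: lerD.
Qed.

Lemma char_scale L y z l : l != 0 -> Char L y z -> Char L (l *: y) (l * z).
Proof.
move=> l0 h c N hc hN.
set c' := fun n => l^-1 * c n.
have hc' : inX c' by apply: inX_scale.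
have hN' : supp_le N c' by apply: supp_scale.
have t := h c' N hc' hN'.
have ec : c = (fun n => l * c' n).
  by apply: boolp.funext => n; rewrite /c' mulrA divff // mul1r.
have -> : l * z - pairN N alpha c = l * (z - pairN N alpha c').
  by rewrite {1}ec pairN_scale mulrBr.
have -> : l *: y - iota c = l *: (y - iota c').
  by rewrite {1}ec iota_scale // scalerBr.
rewrite nCM.
have -> : nY (l *: (y - iota c')) = nC l * nY (y - iota c').
  by apply: complexI; rewrite rmorphM /= -!normY /nC -normC_real normrZ.
rewrite mulrCA; apply: ler_wpM2l => //; exact: nC_ge0.
Qed.

Lemma char_iota c N : inX c -> supp_le N c -> Char K (iota c) (pairN N alpha c).
Proof. by move=> hc hN d N' hd hN'; apply: plip. Qed.

Lemma phi_iota c N : inX c -> supp_le N c -> phi (iota c) = pairN N alpha c.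
Proof.
move=> hc hN; apply: (@char_uniq (K + K) K (iota c)) => //.
  by apply: addr_ge0.
  exact: phi_char.
exact: char_iota.
Qed.

Lemma phi_add y1 y2 : phi (y1 + y2) = phi y1 + phi y2.
Proof.
have KK : 0 <= K + K by apply: addr_ge0.
apply: (@char_uniq (K + K) (K + K) (y1 + y2)) => //; first exact: phi_char.
by apply: char_add => //; apply: phi_char.
Qed.

Lemma phi0 : phi 0 = 0.
Proof.
have h := phi_add 0 0; rewrite addr0 in h.
by apply: (@addrI _ (phi 0)); rewrite -h addr0.
Qed.

Lemma phi_scale l y : phi (l *: y) = l * phi y.
Proof.
have [->|l0] := eqVneq l 0; first by rewrite scale0r phi0 mul0r.
have KK : 0 <= K + K by apply: addr_ge0.
apply: (@char_uniq (K + K) (K + K) (l *: y)) => //; first exact: phi_char.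
by apply: char_scale => //; apply: phi_char.
Qed.

Lemma phi_bound K2 y : Mbound alpha K2 -> 0 <= K2 -> nC (phi y) <= K2 * nY y.
Proof.
move=> hM2 K20.
apply: (@eps_le _ _ _ (K + K + K2)); first by rewrite !addr_ge0.
move=> e e0; have [c [hc hn]] := dense y e0; have [N hN] := inX_supp hc.
have t1 := phi_char y hc hN.
have t2 := pbound hM2 K20 hc hN; rewrite normC_real lecR -/(nC _) in t2.
rewrite -nY_iota // in t2.
have t3 : nY (iota c) <= nY y + nY (y - iota c).
  rewrite {1}(_ : iota c = y + - (y - iota c)); last by rewrite opprB addrC subrK.
  by apply: le_trans (nYD _ _) _; rewrite nYN.
have -> : phi y = (phi y - pairN N alpha c) + pairN N alpha c by rewrite subrK.
apply: le_trans (nCD _ _) _.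
have t4 := ler_wpM2l K20 t3; rewrite mulrDr in t4.
have t5 : (K + K) * nY (y - iota c) <= (K + K) * e.
  by apply: ler_wpM2l; [apply: addr_ge0 | apply: ltW].
have t6 : K2 * nY (y - iota c) <= K2 * e by apply: ler_wpM2l => //; apply: ltW.
set A := nC _ in t1; set B := nC _ in t2.
rewrite !mulrDl in t5 *; lra.
Qed.

End Alpha.

End Comp.

Section Final.
Variable R : realType.
Local Notation C := R[i].
Local Open Scope complex_scope.

Lemma Mbound_max (alpha : nat -> C) K : Mbound alpha K -> Mbound alpha (Num.max K 0).
Proof.
move=> h N a b ha hb; apply: le_trans (h N a b ha hb) _; rewrite lecR.
rewrite -!mulrA ler_wpM2r ?le_max ?lexx //.
by apply: mulr_ge0; apply: l2N_ge0.
Qed.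

Lemma bound_conv (Y : completeNormedModType C) (f : Y -> C) K :
  (forall x : Y, `|f x| <= K%:C * `|x|) -> forall x, nC (f x) <= Num.max K 0 * nY x.
Proof.
move=> h x; have := h x; rewrite normC_real normY -rmorphM lecR -/(nC _) => t.
apply: le_trans t _; apply: ler_wpM2r; [exact: nY_ge0 | by rewrite le_max lexx].
Qed.

Lemma bound_back (Y : completeNormedModType C) (f : Y -> C) K :
  (forall x, nC (f x) <= K * nY x) -> forall x : Y, `|f x| <= K%:C * `|x|.
Proof. by move=> h x; rewrite normC_real normY -rmorphM lecR; apply: h. Qed.

Definition delta (n : nat) : nat -> C := fun m => if m == n then 1 else 0.

Lemma delta_supp n : (0 < n)%N -> supp_le n (delta n).
Proof.
move=> n0 m /orP[/eqP->|nm]; rewrite /delta; case: eqP => // e.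
  by move: n0; rewrite -e.
by move: nm; rewrite e ltnn.
Qed.

Lemma dconv_delta n : (0 < n)%N -> dconv (delta n) (delta 1) = delta n.
Proof.
move=> n0; apply: boolp.funext => j.
have [->|j0] := posnP j.
  rewrite dconv0 /delta; case: eqP => // e; by move: n0; rewrite -e.
have h1 : supp_le n (delta 1) by apply: supp_leW (delta_supp (ltn0Sn 0)).
rewrite (conv_inner (delta_supp n0) h1 j0).
rewrite (eq_bigr (fun k => if k == j then delta n k else 0)); last first.
  move=> k _.
  rewrite (eq_bigr (fun m => if m == 1%N then (if k == j then delta n k else 0) else 0)); last first.
    move=> m _; rewrite {2}/delta; case: (eqVneq m 1%N) => [->|m1].
      by rewrite muln1 ?eqxx /= rmorph1 mulr1 eq_sym.
    by rewrite raddf0 mulr0 if_same.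
  by rewrite sum_eq1 /= ltnS n0.
rewrite sum_eq1; case: ifP => // /negbT; rewrite j0 /= ltnS -ltnNge => nj.
by rewrite /delta; case: eqP => // e; move: nj; rewrite e ltnn.
Qed.

Lemma inX_delta n : (0 < n)%N -> inX (delta n).
Proof.
move=> n0; rewrite -dconv_delta //; apply: (@inX_conv _ n).
  exact: delta_supp.
exact: supp_leW (delta_supp (ltn0Sn 0)).
Qed.

Lemma decomp (c : nat -> C) N : supp_le N c ->
  c = (fun m => \sum_(1 <= n < N.+1) c n * delta n m).
Proof.
move=> h; apply: boolp.funext => m.
rewrite (eq_bigr (fun n => if n == m then c n else 0)); last first.
  by move=> n _; rewrite /delta eq_sym; case: eqP; rewrite ?mulr1 ?mulr0.
rewrite sum_eq1; case: ifP => // /negbT hm; apply: h.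
by move: hm; case: m => //= m; rewrite ltnS -ltnNge => ->; rewrite ?orbT.
Qed.

End Final.

Unset Implicit Arguments.

Theorem lemma7 (R : realType) (Y : completeNormedModType R[i])
    (iota : (nat -> R[i]) -> Y) :
  is_completion iota ->
  (forall alpha : nat -> R[i], inM alpha ->
     exists phi : Y -> R[i],
       bdd_functional phi /\
       (forall (c : nat -> R[i]) (N : nat), inX c -> supp_le N c ->
          phi (iota c) = pairN N alpha c) /\
       (forall psi : Y -> R[i], bdd_functional psi ->
          (forall (c : nat -> R[i]) (N : nat), inX c -> supp_le N c ->
             psi (iota c) = pairN N alpha c) -> psi = phi) /\
       dual_norm phi = Mnorm alpha) /\
  (forall phi : Y -> R[i], bdd_functional phi ->
     exists alpha : nat -> R[i], inM alpha /\
       forall (c : nat -> R[i]) (N : nat), inX c -> supp_le N c ->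
         phi (iota c) = pairN N alpha c).
Proof.
move=> Hc; split.
  move=> alpha [K0 hK0].
  have hM := Mbound_max hK0; set K := Num.max K0 0 in hM.
  have K0' : 0 <= K by rewrite le_max lexx orbT.
  exists (phi iota alpha K); split; [|split; [|split]].
  - split; first exact: (phi_add Hc hM K0').
    split; first exact: (phi_scale Hc hM K0').
    exists K; apply: bound_back => x; exact: (phi_bound Hc hM K0' x hM K0').
  - by move=> c N hc hN; apply: (phi_iota Hc hM K0').
  - move=> psi [padd [pscale [K' hK']]] hpsi; apply: boolp.funext => y.
    have KK : 0 <= K + K by apply: addr_ge0.
    have L0 : 0 <= Num.max K' 0 by rewrite le_max lexx orbT.
    apply: (@char_uniq _ _ _ Hc alpha (Num.max K' 0) (K + K) y) => //; last first.
      exact: (phi_char Hc hM K0').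
    move=> c N hc hN.
    have -> : psi y - pairN N alpha c = psi (y - iota c).
      by rewrite -(hpsi c N hc hN) -[in RHS]scaleN1r padd pscale mulN1r.
    exact: bound_conv.
  - rewrite /dual_norm /Mnorm; congr inf; apply: boolp.funext => K2.
    apply: boolp.propext; split => [[K20 hb]|[K20 hb]]; split => //.
      apply: (bound_to_M Hc (f := phi iota alpha K)) => //.
        by move=> c N hc hN; apply: (phi_iota Hc hM K0').
      by move=> x; have := hb x; rewrite normC_real normY -rmorphM lecR.
    by apply: bound_back => x; exact: (phi_bound Hc hM K0' x hb K20).
move=> phi0 [padd [pscale [K' hK']]].
set alpha := fun n => phi0 (iota (@delta R n)).
have p0 : phi0 0 = 0.
  by have := pscale 0 0; rewrite scale0r mul0r.
have key : forall c N, supp_le N c -> phi0 (iota c) = pairN N alpha c /\ inX c.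
  move=> c N hN.
  have part : forall k,
    phi0 (iota (fun m => \sum_(1 <= n < k.+1) c n * @delta R n m)) =
      \sum_(1 <= n < k.+1) alpha n * c n /\
    inX (fun m => \sum_(1 <= n < k.+1) c n * @delta R n m).
    elim => [|k [IH1 IH2]].
      have e : (fun m => \sum_(1 <= n < 1) c n * @delta R n m) = (fun _ => 0).
        by apply: boolp.funext => m; rewrite big_geq.
      by rewrite e (iota0 Hc) p0 big_geq //; split => //; apply: inX0.
    have e : (fun m => \sum_(1 <= n < k.+2) c n * @delta R n m) =
      (fun m => \sum_(1 <= n < k.+1) c n * @delta R n m) \+ (fun m => c k.+1 * @delta R k.+1 m).
      by apply: boolp.funext => m; rewrite big_nat_recr.
    have hd : inX (fun m => c k.+1 * @delta R k.+1 m) by apply: inX_scale; apply: inX_delta.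
    have hdl : inX (@delta R k.+1) by apply: inX_delta.
    rewrite e (iota_add Hc) // (iota_scale Hc) //.
    split; last exact: inX_add.
    rewrite [in RHS]big_nat_recr //= -IH1.
    transitivity (phi0 (iota (fun m => \sum_(1 <= n < k.+1) c n * @delta R n m)) +
                  phi0 (c k.+1 *: iota (@delta R k.+1))); first exact: padd.
    congr (_ + _); rewrite mulrC; exact: pscale.
  have [h1 h2] := part N; rewrite -(decomp hN) in h1 h2.
  by split.
exists alpha; split; last first.
  by move=> c N _ hN; case: (key c N hN).
exists (Num.max K' 0).
apply: (bound_to_M Hc (f := phi0)).
- by move=> c N _ hN; case: (key c N hN).
- by rewrite le_max lexx orbT.
- exact: bound_conv.
Qed.
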